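(* Let $\|\cdot\|_W$ be the wedge norm on $\mathbb{R}^p$ and let $S_\star=\{1,\dots,s\}$ with $s\in\{1,\dots,p-1\}$. Then for all $\beta\in\mathbb{R}^p$, $$\|\beta_{S_\star^{c}}\|_W\le\sqrt{|S_\star|+1}\;\Omega^{S_\star^{c}}(\beta_{S_\star^{c}}),$$ i.e. the constant $C_{S_\star}$ can be taken equal to $\sqrt{|S_\star|+1}$.
   Context: Let $\mathcal{A}:=\{a\in\mathbb{R}^p: a_j>0\ \forall j,\ a_1\ge\dots\ge a_p\}$ and $\|\beta\|_W:=\inf_{a\in\mathcal{A}}\frac12\sum_{j=1}^p\big(\beta_j^2/a_j+a_j\big)$. For $S=\{1,\dots,s\}$, $\beta_{S^c}$ is the vector in $\mathbb{R}^p$ with entries $\beta_j1\{j\notin S\}$, $\mathcal{A}_{S^c}:=\{(a_j)_{j\in S^c}:a\in\mathcal{A}\}$ and $\Omega^{S^c}(\beta_{S^c}):=\inf_{a\in\mathcal{A}_{S^c}}\frac12\sum_{j\in S^c}\big(\beta_j^2/a_j+a_j\big)$. *)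

(* Defs.v *)
From mathcomp Require Import all_boot all_order all_algebra.
From mathcomp Require Import all_classical all_reals.
Set Implicit Arguments. Unset Strict Implicit. Unset Printing Implicit Defensive.
Import Order.TTheory GRing.Theory Num.Theory.
Local Open Scope ring_scope.
Local Open Scope classical_set_scope.

(* The cone A = {a in R^p : a_j > 0 for all j, a_1 >= ... >= a_p}
   (indices are 0-based: 'I_p = {0,...,p-1}). *)
Definition wedge_cone (R : realType) (p : nat) : set ('I_p -> R) :=
  [set a | (forall j, 0 < a j) /\ (forall i j : 'I_p, (i <= j)%N -> a j <= a i)].

Definition wedge_norm (R : realType) (p : nat) (beta : 'I_p -> R) : R :=
  inf [set (2^-1 * \sum_(j < p) (beta j ^+ 2 / a j + a j)) | a in @wedge_cone R p].

(* S = {1,...,s} corresponds to the 0-based indices j < s.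
   beta_{S^c} : entries beta_j 1{j notin S}. *)
Definition restrict_Sc (R : realType) (p s : nat) (beta : 'I_p -> R) : 'I_p -> R :=
  fun j => if (s <= j)%N then beta j else 0.

(* Omega^{S^c}(beta_{S^c}) = inf over A_{S^c} = {(a_j)_{j in S^c} : a in A}
   of 1/2 sum_{j in S^c} (beta_j^2/a_j + a_j); written as inf over a in A
   of the expression depending only on (a_j)_{j in S^c}. *)
Definition Omega_Sc (R : realType) (p s : nat) (beta : 'I_p -> R) : R :=
  inf [set (2^-1 * \sum_(j < p | (s <= j)%N) (beta j ^+ 2 / a j + a j))
      | a in @wedge_cone R p].

(* Main.v *)
Require Import Defs.
From mathcomp Require Import all_boot all_order all_algebra.
From mathcomp Require Import all_classical all_reals.
From mathcomp Require Import zify ring lra.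
Import Order.TTheory GRing.Theory Num.Theory.
Local Open Scope ring_scope.

Theorem lemma7 (R : realType) (p s : nat) (hs1 : (1 <= s)%N) (hsp : (s <= p - 1)%N)
  (beta : 'I_p -> R) :
  wedge_norm (restrict_Sc s beta)
    <= Num.sqrt (s%:R + 1) * Omega_Sc s (restrict_Sc s beta).
Proof.
set b := restrict_Sc s beta.
set q := Num.sqrt (s%:R + 1 : R).
have hsp' : (s < p)%N by lia.
set s0 : 'I_p := Ordinal hsp'.
have q0 : 0 < q by rewrite sqrtr_gt0 ltr_pwDr.
have q2 : q ^+ 2 = s%:R + 1 by rewrite sqr_sqrtr // addr_ge0.
have b0 : forall j : 'I_p, ~~ (s <= j)%N -> b j = 0.
  by move=> j hj; rewrite /b /restrict_Sc (negbTE hj).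
have hlb : has_lbound [set (2^-1 * \sum_(j < p) (b j ^+ 2 / a j + a j)) | a in @wedge_cone R p].
  exists 0 => x [a [apos _] <-]; rewrite mulr_ge0 ?invr_ge0 //.
  by apply: sumr_ge0 => j _; rewrite addr_ge0 ?divr_ge0 ?sqr_ge0 ?ltW.
rewrite -ler_pdivrMl //.
apply: lb_le_inf.
  exists (2^-1 * \sum_(j < p | (s <= j)%N) (b j ^+ 2 / 1 + 1)), (fun _ => 1).
    by split => // *; rewrite ltr01.
  done.
move=> x [a [apos amon] <-].
rewrite ler_pdivrMl //.
set a' := fun j : 'I_p => q^-1 * (if (s <= j)%N then a j else a s0).
have a'cone : @wedge_cone R p a'.
  split.
    by move=> j; rewrite /a'; case: ifP => _; rewrite mulr_gt0 ?invr_gt0.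
  move=> i j hij; rewrite /a' ler_pM2l ?invr_gt0 //.
  case: ifP => hj; case: ifP => hi.
  - exact: amon.
  - by apply: amon => /=.
  - lia.
  - done.
apply: le_trans (ge_inf hlb _) _.
  by exists a'.
rewrite (bigID (fun j : 'I_p => (s <= j)%N)) /=.
have E1 : \sum_(i < p | (s <= i)%N) (b i ^+ 2 / a' i + a' i) =
   q * \sum_(i < p | (s <= i)%N) (b i ^+ 2 / a i) + q^-1 * \sum_(i < p | (s <= i)%N) a i.
  rewrite !mulr_sumr -big_split /=; apply: eq_bigr => j hj.
  rewrite /a' hj invfM invrK; congr (_ + _); rewrite expr2; ring.
have E2 : \sum_(i < p | ~~ (s <= i)%N) (b i ^+ 2 / a' i + a' i) = s%:R * (q^-1 * a s0).
  rewrite (eq_bigr (fun _ => q^-1 * a s0)); last first.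
    by move=> j hj; rewrite b0 // /a' (negbTE hj) expr0n /= mul0r add0r.
  rewrite sumr_const [RHS]mulrC mulr_natr; congr (_ *+ _).
  have winj : injective (widen_ord (ltnW hsp')) by move=> x1 y1 h; apply: val_inj; exact: (congr1 val h).
  rewrite -[RHS](card_ord s) -(card_imset _ winj).
  apply: eq_card => i; rewrite unfold_in /=; apply/idP/imsetP.
    by rewrite -ltnNge => hi; exists (Ordinal hi) => //; apply: val_inj.
  by case=> k _ ->; rewrite /= -ltnNge ltn_ord.
have hA : a s0 <= \sum_(i < p | (s <= i)%N) a i.
  rewrite (bigD1 s0) //= lerDl; apply: sumr_ge0 => i _; exact: ltW.
rewrite E1 E2.
set U := \sum_(i < p | (s <= i)%N) (b i ^+ 2 / a i).
set A := \sum_(i < p | (s <= i)%N) a i.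
rewrite big_split /= -/U -/A.
rewrite [q * (2^-1 * _)]mulrCA ler_pM2l ?invr_gt0 ?ltr0n // mulrDr -addrA lerD2l.
have -> : q * A = q^-1 * ((s%:R + 1) * A).
  by rewrite -q2 expr2 !mulrA mulVf ?mul1r // gt_eqF.
have -> : q^-1 * A + s%:R * (q^-1 * a s0) = q^-1 * (A + s%:R * a s0).
  by rewrite mulrDr mulrCA.
rewrite ler_pM2l ?invr_gt0 // mulrDl mul1r addrC lerD2r ler_pM2l ?ltr0n //.
Qed.
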